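(* If $G$ is a bipartite $\epsilon$-expander with $2n$ vertices, then every separator in $G$ has size at least $\frac{\epsilon}{2}(n-1)-1$.
   Context: For $\epsilon\in(0,1]$, a bipartite graph $G$ with bipartition $A,B$ is a bipartite $\epsilon$-expander if $|A|=|B|$ and $|N(S)|\geq(1+\epsilon)|S|$ for every $S\subset A$ with $|S|\leq|A|/2$, where $N(S)$ is the set of vertices adjacent to some vertex of $S$. A separator in a graph $G$ is a set $Z\subseteq V(G)$ such that each component of $G-Z$ has at most $|V(G)|/2$ vertices. *)

(* Defs.v *)
From HB Require Import structures.
From mathcomp Require Import all_boot all_order all_algebra.
Set Implicit Arguments. Unset Strict Implicit. Unset Printing Implicit Defensive.
Import Order.TTheory GRing.Theory Num.Theory.

Definition simple_graph (T : finType) (e : rel T) : Prop :=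
  symmetric e /\ irreflexive e.

Definition bipartition (T : finType) (e : rel T) (A B : {set T}) : Prop :=
  [/\ A :&: B = set0, A :|: B = [set: T] &
      forall x y, e x y -> (x \in A) && (y \in B) || (x \in B) && (y \in A)].

Definition nbhd (T : finType) (e : rel T) (S : {set T}) : {set T} :=
  [set y | [exists x in S, e x y]].

Definition bip_expander (R : realFieldType) (eps : R)
    (T : finType) (e : rel T) (A B : {set T}) : Prop :=
  [/\ bipartition e A B, #|A| = #|B| &
      forall S : {set T}, S \subset A -> (#|S|%:R <= #|A|%:R / 2 :> R)%R ->
        ((1 + eps) * #|S|%:R <= #|nbhd e S|%:R)%R].

Definition del_rel (T : finType) (e : rel T) (Z : {set T}) : rel T :=
  fun x y => [&& e x y, x \notin Z & y \notin Z].

Definition component (T : finType) (e : rel T) (Z : {set T}) (x : T) : {set T} :=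
  [set y | connect (del_rel e Z) x y].

Definition separator (T : finType) (e : rel T) (Z : {set T}) : Prop :=
  forall x, x \notin Z -> (#|component e Z x|).*2 <= #|T|.

(* Main.v *)
Require Import Defs.
From mathcomp Require Import all_boot all_order all_algebra.
Import Order.TTheory GRing.Theory Num.Theory.
Set Implicit Arguments. Unset Strict Implicit.

Lemma subset_of_card (T : finType) (D : {set T}) k :
  k <= #|D| -> exists S : {set T}, S \subset D /\ #|S| = k.
Proof.
elim: k => [|k IH] Hk; first by exists set0; rewrite sub0set cards0.
have [S [SD cS]] := IH (ltnW Hk).
have: S \proper D by rewrite properEcard SD cS Hk.
case/properP => _ [x xD xS].
exists (x |: S); split; first by rewrite subUset sub1set xD.
by rewrite cardsU1 xS cS.
Qed.

Lemma split_card (T : finType) (X Y W : {set T}) :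
  X \subset Y -> #|Y :&: W| = #|X :&: W| + #|(Y :\: X) :&: W|.
Proof.
move=> XY; rewrite -(cardsID X (Y :&: W)); congr (_ + _); apply: eq_card => x.
  rewrite !inE; case Xx: (x \in X); rewrite ?andbF //= ?andbT.
  by rewrite (subsetP XY x Xx).
by rewrite !inE; case: (x \in X); case: (x \in Y); case: (x \in W).
Qed.

Definition clb (T : finType) (e : rel T) (Z P : {set T}) : bool :=
  (P \subset ~: Z) && [forall x, forall y, del_rel e Z x y ==> ((x \in P) == (y \in P))].

Lemma clbP (T : finType) (e : rel T) (Z P : {set T}) :
  clb e Z P -> (P \subset ~: Z) /\ forall x y, del_rel e Z x y -> (x \in P) = (y \in P).
Proof.
case/andP => -> /forallP H; split => // x y; move/forallP: (H x) => /(_ y) /implyP H2 /H2.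
by move/eqP.
Qed.

Lemma clb_intro (T : finType) (e : rel T) (Z P : {set T}) :
  (P \subset ~: Z) -> (forall x y, del_rel e Z x y -> (x \in P) = (y \in P)) -> clb e Z P.
Proof.
move=> H1 H2; rewrite /clb H1; apply/forallP => x; apply/forallP => y; apply/implyP => /H2 ->.
by [].
Qed.

Lemma del_sym (T : finType) (e : rel T) (Z : {set T}) :
  symmetric e -> symmetric (del_rel e Z).
Proof. by move=> se x y; rewrite /del_rel se; case: (x \in Z); case: (y \in Z); rewrite ?andbF. Qed.

Lemma clb_notZ (T : finType) (e : rel T) (Z : {set T}) : clb e Z (~: Z).
Proof.
apply: clb_intro => // x y; rewrite /del_rel => /and3P [_ xZ yZ].
by rewrite !inE xZ yZ.
Qed.

Lemma clbU (T : finType) (e : rel T) (Z P Q : {set T}) :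
  clb e Z P -> clb e Z Q -> clb e Z (P :|: Q).
Proof.
move=> /clbP [P1 P2] /clbP [Q1 Q2]; apply: clb_intro; first by rewrite subUset P1.
by move=> x y H; rewrite !inE (P2 _ _ H) (Q2 _ _ H).
Qed.

Lemma clbD (T : finType) (e : rel T) (Z P Q : {set T}) :
  clb e Z P -> clb e Z Q -> clb e Z (P :\: Q).
Proof.
move=> /clbP [P1 P2] /clbP [Q1 Q2]; apply: clb_intro.
  by apply: subset_trans P1; apply: subsetDl.
by move=> x y H; rewrite !inE (P2 _ _ H) (Q2 _ _ H).
Qed.

Lemma comp_clb (T : finType) (e : rel T) (Z : {set T}) x :
  symmetric e -> x \notin Z -> clb e Z (component e Z x).
Proof.
move=> se xZ; have sd := del_sym Z se.
apply: clb_intro.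
  apply/subsetP => y; rewrite !inE => cxy.
  have: connect (del_rel e Z) y x by rewrite (sym_connect_sym sd).
  case/connectP => -[|z p] /= pth lst.
    by rewrite -lst.
  by case/andP: pth => /and3P [].
move=> u v duv; rewrite !inE; apply/idP/idP => H.
  by apply: connect_trans H (connect1 duv).
by apply: connect_trans H (connect1 _); rewrite sd.
Qed.

Lemma key_ineq (T : finType) (e : rel T) (A B Z X S : {set T}) :
  bipartition e A B -> clb e Z X -> S \subset X :&: A ->
  #|nbhd e S| <= #|X :&: B| + #|Z :&: B|.
Proof.
move=> [AB _ bip] /clbP [X1 X2] SXA.
apply: leq_trans (leq_card_setU _ _).
apply: subset_leq_card; apply/subsetP => y; rewrite !inE => /existsP [x /andP [xS exy]].
have /setIP [xX xA] := subsetP SXA x xS.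
have yB : y \in B.
  case/orP: (bip _ _ exy) => /andP [] // xB _.
  have : x \in A :&: B by rewrite inE xA xB.
  by rewrite AB inE.
rewrite yB !andbT /=; case yZ: (y \in Z); rewrite ?orbT // ?orbF.

have xZ : x \notin Z by have := subsetP X1 x xX; rewrite inE.
by rewrite -(X2 x) // /del_rel exy xZ yZ.
Qed.
From mathcomp Require Import lra.
Local Open Scope ring_scope.

Lemma arith3 (R : realFieldType) (eps : R) (n zA zB a1 a2 a3 b1 b2 b3 : nat) :
  0 < eps -> eps <= 1 ->
  (a1 + a2 + a3 + zA)%N = n -> (b1 + b2 + b3 + zB)%N = n ->
  (1 + eps) * a1%:R <= b1%:R + zB%:R ->
  (1 + eps) * a2%:R <= b2%:R + zB%:R ->
  (1 + eps) * a3%:R <= b3%:R + zB%:R ->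
  eps / 2 * (n%:R - 1) - 1 <= (zA + zB)%N%:R.
Proof.
move=> e0 e1 Ha Hb h1 h2 h3.
have : (a1 + a2 + a3 + zA)%N%:R = n%:R :> R by rewrite Ha.
have : (b1 + b2 + b3 + zB)%N%:R = n%:R :> R by rewrite Hb.
rewrite !natrD => Eb Ea.
have zA0 : 0 <= zA%:R :> R by rewrite ler0n.
have zB0 : 0 <= zB%:R :> R by rewrite ler0n.
have hp : 0 <= (1 - eps) * zA%:R by apply: mulr_ge0 => //; lra.
nra.
Qed.

Lemma arith_big (R : realFieldType) (eps : R) (n m zA zB aC bC : nat) :
  0 < eps -> eps <= 1 -> (n <= m.*2.+1)%N -> (m < aC)%N -> (aC + bC <= n)%N ->
  (1 + eps) * m%:R <= bC%:R + zB%:R ->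
  eps / 2 * (n%:R - 1) - 1 <= (zA + zB)%N%:R.
Proof.
move=> e0 e1 H1 H2 H3 h.
have : n%:R <= (m.*2.+1)%:R :> R by rewrite ler_nat.
have : (m.+1)%:R <= aC%:R :> R by rewrite ler_nat.
have : (aC + bC)%:R <= n%:R :> R by rewrite ler_nat.
rewrite -addn1 -muln2 -[(_ * 2).+1]addn1 !natrD ?natrM /= => h3 h2 h1.

have zA0 : 0 <= zA%:R :> R by rewrite ler0n.
have m0 : 0 <= m%:R :> R by rewrite ler0n.
nra.
Qed.

Lemma AB_split (T : finType) (e : rel T) (A B X : {set T}) :
  bipartition e A B -> #|X| = (#|X :&: A| + #|X :&: B|)%N.
Proof.
move=> [AB ABT _]; rewrite -(cardsID A X); congr (_ + _)%N; apply: eq_card => x.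
rewrite !inE; case xA: (x \in A); case xB: (x \in B); rewrite /= ?andbF ?andbT //.
  have : x \in A :&: B by rewrite inE xA xB.
  by rewrite AB inE.
have : x \in A :|: B by rewrite ABT inE.
by rewrite inE xA xB.
Qed.
From mathcomp Require Import zify.

Lemma setUDK (T : finType) (P C N : {set T}) :
  C \subset N :\: P -> (P :|: C) :\: P = C.
Proof.
move=> CR; apply/setP => y; rewrite !inE; case yC: (y \in C); rewrite ?orbT ?orbF ?andbT; last by case: (y \in P).
by have := subsetP CR y yC; rewrite !inE => /andP [-> _].
Qed.

Theorem lemma14 (R : realFieldType) (eps : R) (T : finType) (e : rel T)
    (A B : {set T}) (n : nat) (Z : {set T}) :
  0 < eps -> eps <= 1 ->
  simple_graph e ->
  bip_expander eps e A B ->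
  #|T| = (2 * n)%N ->
  separator e Z ->
  eps / 2 * (n%:R - 1) - 1 <= #|Z|%:R.
Proof.
move=> e0 e1 [se _] [Hbip cAB Hexp] cT Hsep.
set zA := #|Z :&: A|; set zB := #|Z :&: B|.
have cZ : #|Z| = (zA + zB)%N by exact: AB_split Hbip.
have nA : #|A| = n.
  have [AB ABT _] := Hbip.
  have := cardsU A B; rewrite ABT AB cards0 subn0 cardsT cT cAB; lia.
have nB : #|B| = n by rewrite -cAB.
set m := n./2.
have Hm1 : (m.*2 <= n)%N by have := odd_double_half n; lia.
have Hm2 : (n <= m.*2.+1)%N.
  by have := odd_double_half n; case: (odd n) => /=; lia.
have key : forall X S : {set T}, clb e Z X -> S \subset X :&: A -> (#|S| <= m)%N ->
   (1 + eps) * #|S|%:R <= #|X :&: B|%:R + zB%:R.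
  move=> X S cX SX Sm.
  have SA : S \subset A.
    by apply/subsetP => y /(subsetP SX); rewrite inE => /andP [].

  have h : #|S|%:R <= #|A|%:R / 2 :> R.
    rewrite nA ler_pdivlMr // -natrM ler_nat muln2.
    by apply: leq_trans Hm1; rewrite leq_double.
  apply: (le_trans (Hexp S SA h)).
  by rewrite -natrD ler_nat (key_ineq Hbip cX SX).
have H0 : clb e Z set0 && (#|set0 :&: A| <= m)%N.
  rewrite set0I cards0 andbT; apply: clb_intro => [|x y _]; by rewrite ?sub0set ?inE.
case: (@arg_maxnP _ set0 (fun P => clb e Z P && (#|P :&: A| <= m)%N) (fun P => #|P :&: A|) H0).
move=> P /andP [cP Pm] Pmax.
have [PN P2] := clbP cP.
set Rs := ~: Z :\: P.
have cR : clb e Z Rs := clbD (clb_notZ e Z) cP.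
have tA := split_card A (subsetT Z); rewrite setTD setTI nA in tA.
have tB := split_card B (subsetT Z); rewrite setTD setTI nB in tB.
have pA := split_card A PN; have pB := split_card B PN.
rewrite -/Rs in pA pB.
rewrite cZ.
case: (leqP #|Rs :&: A| m) => Rm.
  apply: (arith3 (a3:=0) (b3:=0) e0 e1 _ _ (key P _ cP (subxx _) Pm) (key Rs _ cR (subxx _) Rm)).
  - by clear -tA pA; rewrite /zA; lia.
  - by clear -tB pB; rewrite /zB; lia.
  - by rewrite mulr0 add0r ler0n.
have : (0 < #|Rs :&: A|)%N by apply: leq_ltn_trans Rm.
case/card_gt0P => x; rewrite inE => /andP [xR xA].
have xZ : x \notin Z by move: xR; rewrite !inE => /andP [_].
have xP : x \notin P by move: xR; rewrite !inE => /andP [].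
set C := component e Z x.
have cC : clb e Z C := comp_clb se xZ.
have [CN C2] := clbP cC.
have CR : C \subset Rs.
  apply/subsetP => y yC; rewrite /Rs inE (subsetP CN y yC) andbT.
  have cl : closed (del_rel e Z) (mem P) by move=> u v /P2.
  have cxy : connect (del_rel e Z) x y by move: yC; rewrite inE.
  by rewrite -(closed_connect cl cxy).
have xC : x \in C by rewrite inE connect0.
have cPC := clbU cP cC.
have pcA := split_card A (subsetUl P C); rewrite (setUDK CR) in pcA.
have aC1 : (0 < #|C :&: A|)%N by apply/card_gt0P; exists x; rewrite inE xC xA.
have PCm : (m < #|P :&: A| + #|C :&: A|)%N.
  rewrite ltnNge; apply/negP => H.
  have := Pmax (P :|: C); rewrite cPC pcA H => /(_ isT) /=.
  move: aC1; clear; move: #|P :&: A| #|C :&: A| => a c; rewrite /geq; lia.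
set Q := Rs :\: C.
have cQ : clb e Z Q := clbD cR cC.
have rA := split_card A CR; have rB := split_card B CR.
rewrite -/Q in rA rB.
have Qm : (#|Q :&: A| <= m)%N.
  clear -tA pA rA PCm Hm2; move: m PCm Hm2 => m'; lia.
case: (leqP #|C :&: A| m) => Cm.
  apply: (arith3 e0 e1 _ _ (key P _ cP (subxx _) Pm) (key C _ cC (subxx _) Cm) (key Q _ cQ (subxx _) Qm)).
  - by clear -tA pA rA; rewrite /zA; lia.
  - by clear -tB pB rB; rewrite /zB; lia.
have sC := Hsep x xZ; rewrite -/C cT (AB_split C Hbip) in sC.
have [S [SC cS]] := subset_of_card (ltnW Cm).
have hS := key C S cC SC; rewrite cS in hS.
apply: (arith_big zA e0 e1 Hm2 Cm _ (hS (leqnn _))).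
clear -sC; lia.
Qed.
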